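(* The continuum $|\mathbb G|$ is indecomposable.
   Context: A graph is a pair $A=(V(A),E(A))$ with $E(A)\subseteq V(A)^2$ reflexive and symmetric; a topological graph additionally has $V$ compact, second countable, zero-dimensional and $E$ closed. Epimorphisms are (continuous) edge-preserving maps surjective on vertices and edges. A vertex set $S$ is disconnected if it splits into two nonempty closed subsets with no edges between them; otherwise connected; components are maximal connected subsets. An epimorphism $f\colon A\to B$ is confluent if for every connected $Q\subseteq V(B)$ each component $C$ of $f^{-1}(Q)$ has $f(C)=Q$. $\mathbb G$ is the projective Fraïssé limit of the class of finite connected graphs with confluent epimorphisms, i.e. the unique topological graph such that (1) every finite connected graph is a confluent epimorphic image of $\mathbb G$; (2) for finite connected $A,B$ and confluent epimorphisms $f\colon\mathbb G\to A$, $g\colon B\to A$ there is a confluent epimorphism $h\colon\mathbb G\to B$ with $f=g\circ h$; (3) for each $\varepsilon>0$ some confluent epimorphism from $\mathbb G$ onto a finite connected graph has all point-preimages of diameter $<\varepsilon$. The edge relation of $\mathbb G$ is an equivalence relation and $|\mathbb G|=V(\mathbb G)/E(\mathbb G)$ (quotient topology) is its topological realization. A continuum is indecomposable if it is not the union of two proper subcontinua. *)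

(* Defs.v *)
From HB Require Import structures.
From Stdlib Require Import Relation_Operators.
From mathcomp Require Import all_boot all_order all_algebra.
From mathcomp Require Import generic_quotient.
Local Open Scope quotient_scope.
From mathcomp Require Import all_classical all_reals all_analysis.

Set Implicit Arguments.
Unset Strict Implicit.
Unset Printing Implicit Defensive.

Local Open Scope classical_set_scope.
Local Open Scope ring_scope.
Local Open Scope quotient_scope.

(* [cl] is the notion of "closed set" of the ambient vertex space:
   [closed] for topological graphs, [fun _ => True] for finite (discrete) graphs. *)
Definition gdisconnected {X : Type} (cl : set X -> Prop)
    (E : X -> X -> Prop) (S : set X) : Prop :=
  exists P Q : set X,
    [/\ P `|` Q = S, P `&` Q = set0, P !=set0 & Q !=set0] /\
    [/\ (exists2 C, cl C & P = S `&` C),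
        (exists2 C, cl C & Q = S `&` C) &
        (forall p q, P p -> Q q -> ~ E p q)].

Definition gconnected {X : Type} (cl : set X -> Prop)
    (E : X -> X -> Prop) (S : set X) : Prop :=
  ~ gdisconnected cl E S.

Definition gcomponent {X : Type} (cl : set X -> Prop)
    (E : X -> X -> Prop) (S C : set X) : Prop :=
  [/\ C `<=` S, gconnected cl E C &
      forall D, C `<=` D -> D `<=` S -> gconnected cl E D -> D = C].

Definition epimorphism {X Y : Type} (EX : X -> X -> Prop) (EY : Y -> Y -> Prop)
    (f : X -> Y) : Prop :=
  [/\ (forall x y, EX x y -> EY (f x) (f y)),
      (forall b, exists x, f x = b) &
      (forall a b, EY a b -> exists x y, [/\ EX x y, f x = a & f y = b])].

Definition confluent {X Y : Type}
    (clX : set X -> Prop) (EX : X -> X -> Prop)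
    (clY : set Y -> Prop) (EY : Y -> Y -> Prop) (f : X -> Y) : Prop :=
  forall Q : set Y, gconnected clY EY Q ->
  forall C : set X, gcomponent clX EX (f @^-1` Q) C -> f @` C = Q.

Definition discrete_closed_sets {T : Type} : set T -> Prop := fun _ => True.

Definition fin_conn_graph (T : finType) (e : rel T) : Prop :=
  [/\ (0 < #|T|)%N, reflexive e, symmetric e &
      gconnected discrete_closed_sets e setT].

Definition top_graph (V : topologicalType) (E : V -> V -> Prop) : Prop :=
  [/\ compact [set: V], @second_countable V & zero_dimensional V] /\
  [/\ closed [set p : V * V | E p.1 p.2],
      (forall x, E x x) & (forall x y, E x y -> E y x)].

Definition cont_to_fin {V : topologicalType} {T : finType} (f : V -> T) : Prop :=
  forall a : T, open (f @^-1` [set a]).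

Definition conf_epi_top {V : topologicalType} (E : V -> V -> Prop)
    {T : finType} (e : rel T) (f : V -> T) : Prop :=
  [/\ cont_to_fin f, epimorphism E e f &
      confluent closed E discrete_closed_sets e f].

Definition conf_epi_fin {T1 T2 : finType} (e1 : rel T1) (e2 : rel T2)
    (g : T1 -> T2) : Prop :=
  epimorphism e1 e2 g /\
  confluent discrete_closed_sets e1 discrete_closed_sets e2 g.

(* (1)-(3): V with edge relation E is the projective Fraisse limit G *)
Definition is_G (R : realType) (V : pseudoMetricType R) (E : V -> V -> Prop) : Prop :=
  [/\ top_graph E,
      (forall (T : finType) (e : rel T), fin_conn_graph e ->
         exists f : V -> T, conf_epi_top E e f),
      (forall (A B : finType) (eA : rel A) (eB : rel B) (f : V -> A) (g : B -> A),
         fin_conn_graph eA -> fin_conn_graph eB ->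
         conf_epi_top E eA f -> conf_epi_fin eB eA g ->
         exists h : V -> B, conf_epi_top E eB h /\ f = g \o h) &
      (forall eps : R, 0 < eps ->
         exists (T : finType) (e : rel T) (f : V -> T),
           [/\ fin_conn_graph e, conf_epi_top E e f &
               forall x y, f x = f y -> ball x eps y])].

(* quotient by the equivalence relation generated by E (which is E itself
   when E is an equivalence relation, as it is for G) *)
Section Realization.
Variables (V : topologicalType) (E : V -> V -> Prop).

Definition Eclos (x y : V) : bool := `[< clos_refl_sym_trans V E x y >].

Lemma Eclos_refl : reflexive Eclos.
Proof. by move=> x; apply/asboolP; apply: rst_refl. Qed.

Lemma Eclos_sym : symmetric Eclos.
Proof.
by move=> x y; apply/asboolP/asboolP => H; apply: rst_sym.
Qed.

Lemma Eclos_trans : transitive Eclos.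
Proof.
move=> y x z /asboolP H1 /asboolP H2; apply/asboolP.
exact: (rst_trans _ _ _ _ _ H1 H2).
Qed.

Definition Eclos_equiv := EquivRel Eclos Eclos_refl Eclos_sym Eclos_trans.

Definition realization : topologicalType :=
  quotient_topology {eq_quot Eclos_equiv}.
End Realization.

Definition continuum (X : topologicalType) : Prop :=
  [/\ hausdorff_space X, [set: X] !=set0, compact [set: X] & connected [set: X]].

Definition subcontinuum {X : topologicalType} (A : set X) : Prop :=
  [/\ A !=set0, compact A & connected A].

Definition indecomposable_continuum (X : topologicalType) : Prop :=
  continuum X /\
  forall A B : set X, subcontinuum A -> subcontinuum B ->
    A `|` B = [set: X] -> A = [set: X] \/ B = [set: X].

(* Main.v *)
Require Import Defs.
From mathcomp Require Import all_boot all_order all_algebra.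
From Stdlib Require Import Relation_Operators.
From mathcomp Require Import generic_quotient.
From mathcomp Require Import all_classical all_reals all_analysis.
Set Implicit Arguments.
Unset Strict Implicit.
Unset Printing Implicit Defensive.
Local Open Scope classical_set_scope.
Local Open Scope ring_scope.
Import Order.TTheory GRing.Theory Num.Theory.
Local Open Scope quotient_scope.

Lemma gdisc_closed_adj {T : Type} (E : T -> T -> Prop) (Q S : set T) :
  gconnected discrete_closed_sets E Q ->
  S `<=` Q -> S !=set0 -> (forall p q, S p -> Q q -> E p q -> S q) -> S = Q.
Proof.
move=> cQ SQ [s Ss] cl; apply: contrapT => SnQ.
have [q [Qq nSq]] : exists q, Q q /\ ~ S q.
  apply: contrapT => h; apply: SnQ; apply/seteqP; split => // x Qx.
  by apply: contrapT => nSx; apply: h; exists x.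
apply: cQ; exists S, (Q `\` S); split; split.
- apply/seteqP; split => x; first by case=> [/SQ|[]].
  by move=> Qx; have [Sx|nSx] := pselect (S x); [left|right].
- by apply/seteqP; split => x // [? []].
- by exists s.
- by exists q.
- exists S => //; apply/seteqP; split => x; [move=> Sx; split => //; exact: SQ|by case].
- exists (~` S) => //.
- by move=> p r Sp [Qr nSr] epr; apply: nSr; exact: (cl p r Sp Qr epr).
Qed.

Lemma gcomp_nonempty {T : Type} cl (E : T -> T -> Prop) (S C : set T) x :
  gcomponent cl E S C -> S x -> C !=set0.
Proof.
move=> [CS cC maxC] Sx; apply: contrapT => /set0P/negP; rewrite negbK => /eqP C0.
have : [set x] = C.
  apply: maxC; first by rewrite C0.
    by move=> y ->.
  move=> [P [Q' [[PQ PQ0 [p Pp] [q Qq]] _]]].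
  have : (P `|` Q') p by left.
  have : (P `|` Q') q by right.
  rewrite PQ => /= qx px.
  have : (P `&` Q') x by split; [rewrite -px | rewrite -qx].
  by rewrite PQ0.
move=> h; have : C x by rewrite -h.
by rewrite C0.
Qed.

Lemma gcomp_adj {T : Type} (E : T -> T -> Prop) (S C : set T) x y :
  gcomponent discrete_closed_sets E S C -> (forall a b, E a b -> E b a) ->
  C x -> S y -> E x y -> C y.
Proof.
move=> [CS cC maxC] Esym Cx Sy Exy.
suff: C `|` [set y] = C by move=> <-; right.
apply: maxC => //; first by move=> z [/CS|->].
have H (P Q' : set T) : P `|` Q' = C `|` [set y] -> P `&` Q' = set0 -> Q' !=set0 ->
    (forall p q, P p -> Q' q -> ~ E p q) -> P y -> False.
  move=> PQ PQ0 [q0 Qq0] noE Py.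
  have QC : Q' `<=` C.
    move=> q Qq; have : (P `|` Q') q by right.
    rewrite PQ => -[//|/= qy]; subst.
    by have : (P `&` Q') y by []; rewrite PQ0.
  have [[c [Pc Cc]]|] := pselect ((P `&` C) !=set0).
    apply: cC; exists (P `&` C), Q'; split; split.
    - apply/seteqP; split => z; first by case=> [[]|/QC].
      move=> Cz; have : (P `|` Q') z by rewrite PQ; left.
      by case=> [Pz|]; [left|right].
    - by apply/seteqP; split => z // [[Pz _] Qz]; rewrite -PQ0.
    - by exists c.
    - by exists q0.
    - by exists P => //; apply/seteqP; split => z [] //.
    - by exists Q' => //; apply/seteqP; split => z; [move=> Qz; split => //; exact: QC|case].
    - by move=> p q [Pp _] Qq; exact: noE.
  move=> /set0P/negP; rewrite negbK => /eqP PC0.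
  have : (P `|` Q') x by rewrite PQ; left.
  case=> [Px|Qx]; first by have : (P `&` C) x by []; rewrite PC0.
  exact: (noE y x Py Qx (Esym _ _ Exy)).
move=> [P [Q' [[PQ PQ0 neP neQ] [_ _ noE]]]].
have : (P `|` Q') y by rewrite PQ; right.
case=> [Py|Qy]; first exact: (H P Q').
apply: (H Q' P) => //.
- by rewrite setUC.
- by rewrite setIC.
- by move=> p q Qp Pq /Esym; apply: noE.
Qed.

Section Dbl.
Variables (T : finType) (e : rel T) (keep : bool -> T -> T -> bool) (link : pred T).
Definition dbl : rel (T * bool) := fun x y =>
  if x.2 == y.2 then e x.1 y.1 && keep x.2 x.1 y.1 else (x.1 == y.1) && link x.1.
Hypotheses (Hg : fin_conn_graph e) (Hks : forall i p q, keep i p q = keep i q p)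
 (Hkr : forall i p, keep i p p)
 (Hcov : forall i p q, e p q -> keep i p q || (link p && keep (~~ i) p q))
 (Hl : exists p, link p).

Lemma dbl_sym : symmetric dbl.
Proof.
case: Hg => _ _ es _.
move=> [a i] [b j]; rewrite /dbl /= [j == i]eq_sym.
case: eqP => [->|_]; first by rewrite es Hks.
by case: (eqVneq a b) => [->|]; rewrite ?eqxx // eq_sym => /negbTE ->.
Qed.

Lemma dbl_img (Qa : set T) (X : set (T * bool)) :
  gconnected discrete_closed_sets e Qa -> X `<=` [set x | Qa x.1] -> X !=set0 ->
  (forall x y, X x -> Qa y.1 -> dbl x y -> X y) -> fst @` X = Qa.
Proof.
move=> cQ XQ [x0 Xx0] cl; apply: (gdisc_closed_adj cQ).
- by move=> _ [x Xx <-]; exact: XQ.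
- by exists x0.1; exists x0.
move=> p q [[p' i] Xx /= <-] Qq epq.
have Qp : Qa p' by exact: (XQ _ Xx).
case/orP: (Hcov i epq) => [k|/andP[l k]].
  exists (q, i) => //; apply: (cl (p', i)) => //.
  by rewrite /dbl /= eqxx epq k.
have Xp : X (p', ~~ i).
  apply: (cl (p', i)) => //; rewrite /dbl /=.
  by case: i {Xx k} => /=; rewrite eqxx l.
exists (q, ~~ i) => //; apply: (cl (p', ~~ i)) => //.
by rewrite /dbl /= eqxx epq k.
Qed.

Lemma dbl_fin_conn : fin_conn_graph dbl.
Proof.
case: (Hg) => T0 er es cT; split.
- by rewrite card_prod card_bool muln_gt0 T0.
- by move=> [a i]; rewrite /dbl /= eqxx er Hkr.
- exact: dbl_sym.
move=> [P [Q' [[PQ PQ0 [p Pp] [q Qq]] [_ _ noE]]]].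
have clP : forall x y, P x -> dbl x y -> P y.
  move=> x y Px dxy; have : (P `|` Q') y by rewrite PQ.
  by case=> // Qy; case: (noE x y Px Qy).
have clQ : forall x y, Q' x -> dbl x y -> Q' y.
  move=> x y Qx dxy; have : (P `|` Q') y by rewrite PQ.
  by case=> // Py; case: (noE y x Py Qx); rewrite dbl_sym.
have imP : fst @` P = setT.
  by apply: dbl_img => //; [exists p| move=> x y Px _; exact: clP].
have imQ : fst @` Q' = setT.
  by apply: dbl_img => //; [exists q| move=> x y Qx _; exact: clQ].
case: Hl => p0 l0.
have : (fst @` P) p0 by rewrite imP.
have : (fst @` Q') p0 by rewrite imQ.
move=> [[a j] Qa /= aj] [[b i] Pb /= bi].
move: Qa Pb; rewrite aj bi => Qa Pb.
case: (eqVneq i j) => [ij|nij].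
  by move: Pb; rewrite ij => Pb; have : (P `&` Q') (p0, j) by []; rewrite PQ0.
apply: (noE _ _ Pb Qa); rewrite /dbl /= (negbTE nij) eqxx.
exact: l0.
Qed.

Lemma dbl_conf : conf_epi_fin dbl e fst.
Proof.
case: (Hg) => T0 er es cT; split; first split.
- move=> [a i] [b j]; rewrite /dbl /=; case: ifP => _; first by case/andP.
  by case/andP => /eqP -> _; exact: er.
- by move=> b; exists (b, false).
- move=> a b eab; case/orP: (Hcov false eab) => [k|/andP[l k]].
    by exists (a, false), (b, false); split => //; rewrite /dbl /= eab k.
  by exists (a, true), (b, true); split => //; rewrite /dbl /= eab k.
move=> Qa cQ C Ccomp.
have [[q0 Qq0]|] := pselect (Qa !=set0); last first.
  move=> /set0P/negP; rewrite negbK => /eqP Q0; subst.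
  case: Ccomp => CS _ _; apply/seteqP; split => // z [x Cx _].
  by have := CS _ Cx.
apply: dbl_img => //.
- by case: Ccomp.
- by apply: (gcomp_nonempty (x := (q0, false))) Ccomp _.
move=> x y Cx Qy dxy; apply: (gcomp_adj Ccomp) dxy => //.
by move=> a b; rewrite dbl_sym.
Qed.

End Dbl.
Section Top.
Variables (R : realType) (V : pseudoMetricType R) (E : V -> V -> Prop).
Hypotheses (cV : compact [set: V]) (zV : zero_dimensional V)
  (cE : closed [set p : V * V | E p.1 p.2]).

Lemma V_hausdorff : hausdorff_space V.
Proof.
rewrite open_hausdorff => x y xy; have [U [[oU cU] Ux nUy]] := zV xy.
exists (U, ~` U); first by split; rewrite inE.
split => //=; first exact: closed_openC.
by rewrite setICr.
Qed.

Lemma sat_closed (C : set V) : closed C ->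
  closed [set y | exists2 x, C x & E x y].
Proof.
move=> cC.
have -> : [set y | exists2 x, C x & E x y] =
    snd @` ((C `*` setT) `&` [set p : V * V | E p.1 p.2]).
  apply/seteqP; split => [y [x Cx Exy]|_ [[x y] [[Cx _] Exy] <-]].
    by exists (x, y).
  by exists x.
apply: (compact_closed V_hausdorff); apply: continuous_compact.
  apply: continuous_subspaceT => p; exact: cvg_snd.
apply: compact_closedI => //; apply: compact_setX => //.
exact: (subclosed_compact cC cV).
Qed.

Lemma sep_closed (P Q : set V) : closed P -> closed Q -> P `&` Q = set0 ->
  exists2 eps : R, 0 < eps & forall y z, ball y eps z -> P y -> Q z -> False.
Proof.
move=> cP cQ PQ0.
have /compact_near_coveringP nc := cV.
pose Pr (eps : R) (y : V) := forall z, ball y eps z -> ~ (P y /\ Q z).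
have H := nc R (0:R)^'+ Pr _.
have : \forall eps \near (0:R)^'+, [set: V] `<=` Pr eps.
  apply: H => x _.
  have [d d0 Hd] : exists2 d : R, 0 < d & (ball x d `<=` ~` P \/ ball x d `<=` ~` Q).
    have [Px|nPx] := pselect (P x).
      have nQx : (~` Q) x by move=> Qx; have : (P `&` Q) x by []; rewrite PQ0.
      have /nbhs_ballP [d d0 Hd] : nbhs x (~` Q).
        by apply: open_nbhs_nbhs; split => //; exact: closed_openC.
      by exists d => //; right.
    have /nbhs_ballP [d d0 Hd] : nbhs x (~` P).
      by apply: open_nbhs_nbhs; split => //; exact: closed_openC.
    by exists d => //; left.
  have d20 : 0 < d / 2 by rewrite divr_gt0.
  near=> x' i => z bz [Px' Qz].
  have bx' : ball x (d / 2) x' by near: x'; exact: near_ball.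
  have ilt : i < d / 2 by near: i; exact: nbhs_right_lt.
  have bz' : ball x d z.
    rewrite (splitr d); apply: (ball_triangle bx'); exact: le_ball (ltW ilt) _ bz.
  case: Hd => Hd.
    by apply: (Hd x'); [rewrite (splitr d); apply: le_ball bx'; rewrite lerDl ltW|].
  exact: Hd bz' Qz.
move=> Hn.
have [eps [e0 He]] := filter_ex (filterI (nbhs_right_gt (0:R)) Hn).
by exists eps => // y z byz Py Qz; exact: (He y I z byz).
Unshelve. all: by end_near.
Qed.

Lemma no_edge_near (x z : V) : ~ E x z ->
  exists2 eps : R, 0 < eps & forall p q, ball x eps p -> ball z eps q -> ~ E p q.
Proof.
move=> nE.
have : nbhs (x, z) (~` [set p : V * V | E p.1 p.2]).
  by apply: open_nbhs_nbhs; split => //; exact: closed_openC.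
move/nbhs_ballP => [e e0 He]; exists e => // p q bp bq.
exact: (He (p, q)).
Qed.

End Top.

Section Main.
Variables (R : realType) (V : pseudoMetricType R) (E : V -> V -> Prop).
Hypothesis hG : is_G E.

Lemma G_parts : [/\ compact [set: V], zero_dimensional V,
  closed [set p : V * V | E p.1 p.2], (forall x, E x x) & (forall x y, E x y -> E y x)].
Proof. by case: hG => [[[? ? ?] [? ? ?]] _ _ _]. Qed.

Lemma E_trans x y z : E x y -> E y z -> E x z.
Proof.
case: G_parts => cV zV cE Er Es.
case: hG => _ _ H3 H4.
move=> Exy Eyz; apply: contrapT => nExz.
have [eps e0 He] := no_edge_near cE nExz.
have [T [e [f [Hg Hf Hfib]]]] := H4 eps e0.
have Hf' := Hf; case: Hf' => cf [fe fs fes] fconf.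
have nac : ~ e (f x) (f z).
  move=> eac; have [p [q [Epq fp fq]]] := fes _ _ eac.
  by apply: (He p q) => //; apply: Hfib; rewrite ?fp ?fq.
have eab := fe _ _ Exy; have ebc := fe _ _ Eyz.
case: (Hg) => _ er _ _.
have ab : (f x == f y) = false.
  by apply/eqP => ab; apply: nac; rewrite ab.
have cb : (f z == f y) = false.
  by apply/eqP => cb; apply: nac; rewrite cb.
have ac : (f x == f z) = false.
  by apply/eqP => ac; apply: nac; rewrite ac er.
set a := f x in ab ac nac eab *; set b := f y in ab cb eab ebc *; set c := f z in cb ac nac ebc *.
pose keep (i : bool) (p q : T) := ~~ (((p == b) && (q == (if i then a else c))) ||
   ((q == b) && (p == (if i then a else c)))).
have Hks : forall i p q, keep i p q = keep i q p by move=> i p q; rewrite /keep orbC.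
have ba : (b == a) = false by rewrite eq_sym.
have bc : (b == c) = false by rewrite eq_sym.
have ca : (c == a) = false by rewrite eq_sym.
have Hkr : forall i p, keep i p p.
  move=> i p; rewrite /keep orbb; apply/negP => /andP[/eqP -> ].
  by case: i; rewrite ?ba ?bc.
have nab : a <> b by move/eqP; rewrite ab.
have ncb : c <> b by move/eqP; rewrite cb.
have nac' : a <> c by move/eqP; rewrite ac.
have Hcov : forall i p q, e p q -> keep i p q || ((fun _ => true) p && keep (~~ i) p q).
  move=> i p q _; rewrite /= /keep -negb_and; apply/negP => /andP [h1 h2].
  by case: i h1 h2 => /= /orP[/andP[/eqP h1 /eqP h2]|/andP[/eqP h1 /eqP h2]]
    /orP[/andP[/eqP h3 /eqP h4]|/andP[/eqP h3 /eqP h4]]; congruence.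
have Hl : exists p : T, (fun _ => true) p by exists a.
have [h [Hh fgh]] := H3 T _ e (dbl e keep (fun _ => true)) f fst Hg
  (dbl_fin_conn Hg Hks Hkr Hcov Hl) Hf (dbl_conf Hg Hks Hcov).
case: Hh => _ [he _ _] _.
have hx : (h x).1 = a by rewrite /a fgh.
have hy : (h y).1 = b by rewrite /b fgh.
have hz : (h z).1 = c by rewrite /c fgh.
have dxy := he _ _ Exy; have dyz := he _ _ Eyz.
move: dxy dyz hx hy hz; case: (h x) => [ax ix]; case: (h y) => [bb iy];
  case: (h z) => [cc iz] /= dxy dyz hx hy hz.
move: dxy dyz; rewrite /dbl /= hx hy hz /keep.
by case: ix iy iz => [] [] [] /=; rewrite ?eqxx ?ab ?ba ?bc ?cb ?ac ?ca ?andbF ?andbT //=.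
Qed.


Lemma Eclos_E x y : Eclos E x y <-> E x y.
Proof.
case: G_parts => _ _ _ Er Es.
split; last by move=> h; apply/asboolP; exact: rst_step.
move/asboolP; elim => [a b //|a|a b _ IH|a b c _ IH1 _ IH2].
- exact: Er.
- exact: Es.
- exact: E_trans IH1 IH2.
Qed.

Local Notation Q := (realization E).
Local Notation pi := (\pi_Q : V -> Q).

Lemma piP x y : pi x = pi y <-> E x y.
Proof. by split => [/eqquotP /Eclos_E|/Eclos_E h]; [|apply/eqquotP]. Qed.

Lemma repr_pi y : E (repr (pi y)) y.
Proof. by apply/piP; rewrite reprK. Qed.

Definition satQ (S : set V) : set Q := [set q | S (repr q)].

Lemma satQ_pre (S : set V) : (forall x y, S x -> E x y -> S y) ->
  pi @^-1` satQ S = S.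
Proof.
case: G_parts => _ _ _ Er Es.
move=> Ssat; apply/seteqP; split => y /=.
  by move=> h; apply: Ssat h (repr_pi y).
by move=> Sy; apply: Ssat Sy (Es _ _ (repr_pi y)).
Qed.

Lemma pre_sat (A : set Q) x y : (pi @^-1` A) x -> E x y -> (pi @^-1` A) y.
Proof. by rewrite /preimage /= => h /piP <-. Qed.

Lemma openQ (A : set Q) : open A <-> open (pi @^-1` A).
Proof. by []. Qed.

Lemma closedQ (A : set Q) : closed A <-> closed (pi @^-1` A).
Proof.
rewrite -openC -[closed (pi @^-1` A)]openC preimage_setC.
by split => h; exact h.
Qed.

Lemma sat_open_nbhd (U : set V) (x : V) : open U -> (forall y, E x y -> U y) ->
  exists O : set V, [/\ open O, O x, O `<=` U & (forall a b, O a -> E a b -> O b)].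
Proof.
case: G_parts => cV zV cE Er Es.
move=> oU CU.
pose O := ~` [set y | exists2 u, (~` U) u & E u y].
exists O; split.
- apply: closed_openC; apply: sat_closed => //; exact: open_closedC.
- by move=> [u nUu Eux]; apply: nUu; apply: CU; exact: Es.
- by move=> y Oy; apply: contrapT => nUy; apply: Oy; exists y.
- move=> a b Oa Eab [u nUu Eub]; apply: Oa; exists u => //.
  exact: E_trans Eub (Es _ _ Eab).
Qed.

Lemma Q_hausdorff : hausdorff_space Q.
Proof.
case: G_parts => cV zV cE Er Es.
rewrite open_hausdorff => p q pq.
pose x := repr p; pose z := repr q.
have nE : ~ E x z.
  by move/piP; rewrite /x /z !reprK => pq'; move: pq; rewrite pq' eqxx.
have cs1 (w : V) : closed [set y | E w y].
  have -> : [set y | E w y] = [set y | exists2 u, [set w] u & E u y].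
    by apply/seteqP; split => y; [move=> h; exists w|move=> [u -> ]].
  apply: sat_closed => //.
  exact: (accessible_closed_set1 (hausdorff_accessible (V_hausdorff zV))).
have dis : [set y | E x y] `&` [set y | E z y] = set0.
  apply/seteqP; split => // w [/= Exw Ezw]; apply: nE.
  exact: E_trans Exw (Es _ _ Ezw).
have [eps e0 Hsep] := sep_closed cV (cs1 x) (cs1 z) dis.
pose U := [set y | exists2 u, E x u & ball u (eps / 2) y].
pose W := [set y | exists2 u, E z u & ball u (eps / 2) y].
have e20 : 0 < eps / 2 by rewrite divr_gt0.
have UW : forall y, U y -> W y -> False.
  move=> y [u Exu bu] [w Ezw bw]; apply: (Hsep u w) => //.
  rewrite (splitr eps); apply: ball_triangle bu _; exact: ball_sym.
have inU : forall y, E x y -> U° y.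
  move=> y Exy; rewrite /interior /=; apply/nbhs_ballP; exists (eps / 2) => //.
  by move=> w bw; exists y.
have inW : forall y, E z y -> W° y.
  move=> y Ezy; rewrite /interior /=; apply/nbhs_ballP; exists (eps / 2) => //.
  by move=> w bw; exists y.
have [Ob1 [oOb1 Ob1x Ob1U Ob1s]] := sat_open_nbhd (@open_interior _ U) inU.
have [Ob2 [oOb2 Ob2z Ob2W Ob2s]] := sat_open_nbhd (@open_interior _ W) inW.
exists (satQ Ob1, satQ Ob2); first by split; apply/mem_set.
split.
- by rewrite /= openQ satQ_pre.
- by rewrite /= openQ satQ_pre.
- apply/eqP; apply/seteqP; split => // r [/= h1 h2].
  exact: (UW _ (interior_subset (Ob1U _ h1)) (interior_subset (Ob2W _ h2))).
Qed.


Lemma pre_gconn (K : set Q) : closed K -> connected K ->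
  gconnected closed E (pi @^-1` K).
Proof.
case: G_parts => cV zV cE Er Es.
move=> cK cnK [P [P2 [[PQ PQ0 [p Pp] [q Qq]] [[C1 cC1 PC1] [C2 cC2 QC2] noE]]]].
have cK' : closed (pi @^-1` K) by rewrite -closedQ.
have PK : P `<=` pi @^-1` K by move=> a Pa; rewrite -PQ; left.
have QK : P2 `<=` pi @^-1` K by move=> a Pa; rewrite -PQ; right.
have Ps : forall a b, P a -> E a b -> P b.
  move=> a b Pa Eab; have : (P `|` P2) b by rewrite PQ; apply: pre_sat (PK _ Pa) Eab.
  by case=> // P2b; case: (noE a b Pa P2b).
have P2s : forall a b, P2 a -> E a b -> P2 b.
  move=> a b Pa Eab; have : (P `|` P2) b by rewrite PQ; apply: pre_sat (QK _ Pa) Eab.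
  by case=> // Pb; case: (noE b a Pb Pa); exact: Es.
have cP : closed P by rewrite PC1; exact: closedI.
have cP2 : closed P2 by rewrite QC2; exact: closedI.
have cSP : closed (satQ P) by rewrite closedQ satQ_pre.
have cSP2 : closed (satQ P2) by rewrite closedQ satQ_pre.
have SPK : satQ P `<=` K.
  by move=> r /PK; rewrite /preimage /= reprK.
have SPeq : satQ P = K.
  apply: cnK.
  - exists (pi p); rewrite /satQ /=; apply: Ps Pp _; exact: Es (repr_pi p).
  - exists (~` satQ P2); first exact: closed_openC.
    apply/seteqP; split => r.
      move=> Pr; split; first exact: SPK.
      by move=> P2r; have : (P `&` P2) (repr r) by []; rewrite PQ0.
    move=> [Kr nP2r]; have : (P `|` P2) (repr r) by rewrite PQ /preimage /= reprK.
    by case.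
  - exists (satQ P) => //; apply/seteqP; split => r; first by move=> h; split => //; exact: SPK.
    by case.
have : K (pi q) by exact: QK.
rewrite -SPeq /satQ /= => /Ps /(_ (repr_pi q)) Pq'.
by have : (P `&` P2) q by []; rewrite PQ0.
Qed.

End Main.

Lemma img_gconn {R : realType} {V : pseudoMetricType R} (E : V -> V -> Prop)
    (T : finType) (e : rel T) (h : V -> T) (K : set V) :
  cont_to_fin h -> (forall x y, E x y -> e (h x) (h y)) ->
  gconnected closed E K -> gconnected discrete_closed_sets e (h @` K).
Proof.
move=> ch he cK [P [P2 [[PQ PQ0 [p Pp] [q Qq]] [_ _ noE]]]].
have clpre (S : set T) : closed (h @^-1` S).
  rewrite -openC preimage_setC.
  have -> : h @^-1` (~` S) = \bigcup_(a in ~` S) (h @^-1` [set a]).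
    by apply/seteqP; split => y; [move=> nSy; exists (h y)|move=> [a nSa /= ->]].
  by apply: bigcup_open => a _; exact: ch.
apply: cK; exists (K `&` h @^-1` P), (K `&` h @^-1` P2); split; split.
- apply/seteqP; split => y; first by case=> -[].
  move=> Ky; have : (P `|` P2) (h y) by rewrite PQ; exists y.
  by case=> ?; [left|right].
- apply/seteqP; split => // y [[_ Py] [_ P2y]].
  by have : (P `&` P2) (h y) by []; rewrite PQ0.
- have : (h @` K) p by rewrite -PQ; left.
  by move=> [y Ky hy]; exists y; split => //; rewrite /preimage /= hy.
- have : (h @` K) q by rewrite -PQ; right.
  by move=> [y Ky hy]; exists y; split => //; rewrite /preimage /= hy.
- by exists (h @^-1` P).
- by exists (h @^-1` P2).
- by move=> a b [_ Pa] [_ P2b] Eab; apply: (noE _ _ Pa P2b); exact: he.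
Qed.

Theorem mainTheorem7 (R : realType) (V : pseudoMetricType R)
    (E : V -> V -> Prop) :
  is_G E -> indecomposable_continuum (realization E).
Proof.
move=> hG.
have [cV zV cE Er Es] := G_parts hG.
case: (hG) => _ H2 H3 H4.
have hQ := Q_hausdorff hG.
pose pi := (\pi_(realization E) : V -> realization E).
have piK : forall q, pi (repr q) = q by move=> q; exact: reprK.
split; first split.
- exact hQ.
- have [T [e [f [Hg Hf _]]]] := H4 1 ltr01.
  case: Hg => T0 _ _ _; case/card_gt0P: T0 => t _.
  case: Hf => _ [_ fs _] _; have [x _] := fs t.
  by exists (pi x).
- have -> : [set: realization E] = pi @` setT.
    by apply/seteqP; split => // q _; exists (repr q) => //; exact: piK.
  apply: continuous_compact => //; apply: continuous_subspaceT.
  exact: pi_continuous.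
- move=> B [q0 Bq0] [C oC BC] [D cD BD].
  rewrite setTI in BC; rewrite setTI in BD.
  have CD : C = D by rewrite -BC -BD.
  rewrite BC; move: Bq0; rewrite BC => Bq0.
  apply: contrapT => nBT.
  have [y0 ny0] : exists y0, ~ C (pi y0).
    apply: contrapT => h; apply: nBT; apply/seteqP; split => // q _.
    rewrite -(piK q); apply: contrapT => nq; apply: h; by exists (repr q).
  have cB' : closed (pi @^-1` C) by rewrite CD -closedQ.
  have cnB' : closed (~` (pi @^-1` C)).
    apply: open_closedC; exact: oC.
  have [eps e0 Hsep] := sep_closed cV cB' cnB' (setICr _).
  have [T [e [f [Hg Hf Hfib]]]] := H4 eps e0.
  case: (Hg) => _ _ _ cT; case: Hf => _ [fe fs fes] _.
  apply: cT; exists (f @` (pi @^-1` C)), (~` (f @` (pi @^-1` C))); split; split.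
  + by rewrite setUCr.
  + by rewrite setICr.
  + by exists (f (repr q0)); exists (repr q0) => //; rewrite /preimage /= piK.
  + exists (f y0) => -[b Bb fb]; apply: (Hsep b y0) => //.
    by apply: Hfib.
  + by exists (f @` (pi @^-1` C)) => //; rewrite setTI.
  + by exists (~` (f @` (pi @^-1` C))) => //; rewrite setTI.
  + move=> p q [b Bb <-] nSq epq.
    have [u [w [Euw fu fw]]] := fes _ _ epq.
    have Bu : (pi @^-1` C) u.
      apply: contrapT => nBu; apply: (Hsep b u) => //; exact: Hfib.
    apply: nSq; exists w => //; exact: (pre_sat hG Bu Euw).
move=> A B [neA cpA cnA] [neB cpB cnB] AB.
apply: contrapT => /not_orP [nA nB].
have ex_out (K : set (realization E)) : K <> setT -> exists x, ~ K (pi x).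
  move=> nK; apply: contrapT => h; apply: nK; apply/seteqP; split => // q _.
  rewrite -(piK q); apply: contrapT => nq; apply: h; by exists (repr q).
have [xa nxa] := ex_out _ nA.
have [xb nxb] := ex_out _ nB.
have cA' : closed (pi @^-1` A) by rewrite -closedQ; exact: compact_closed.
have cB' : closed (pi @^-1` B) by rewrite -closedQ; exact: compact_closed.
have /nbhs_ballP [e1 e10 He1] : nbhs xa (~` (pi @^-1` A)).
  by apply: open_nbhs_nbhs; split => //; exact: closed_openC.
have /nbhs_ballP [e2 e20 He2] : nbhs xb (~` (pi @^-1` B)).
  by apply: open_nbhs_nbhs; split => //; exact: closed_openC.
pose eps := Num.min e1 e2.
have e0 : 0 < eps by rewrite lt_min e10 e20.
have m1 : eps <= e1 by rewrite /eps ge_min lexx.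
have m2 : eps <= e2 by rewrite /eps ge_min lexx orbT.
have [T [e [f [Hg Hf Hfib]]]] := H4 eps e0.
have uA : forall y, (pi @^-1` A) y -> f y <> f xa.
  move=> y Ay fy; have := Hfib _ _ (esym fy) => /(le_ball m1).
  by move/He1.
have vB : forall y, (pi @^-1` B) y -> f y <> f xb.
  move=> y By fy; have := Hfib _ _ (esym fy) => /(le_ball m2).
  by move/He2.
pose keep := fun (_ : bool) (_ _ : T) => true.
pose link := fun p => p == f xa.
have Hks : forall i p q, keep i p q = keep i q p by [].
have Hkr : forall i p, keep i p p by [].
have Hcov : forall i p q, e p q -> keep i p q || (link p && keep (~~ i) p q) by [].
have Hl : exists p, link p by exists (f xa); rewrite /link eqxx.
have [h [Hh fgh]] := H3 T _ e (dbl e keep link) f fst Hg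
  (dbl_fin_conn Hg Hks Hkr Hcov Hl) Hf (dbl_conf Hg Hks Hcov).
case: Hh => ch [he hs _] _.
have cnA' : gconnected closed E (pi @^-1` A).
  by apply: (pre_gconn hG) => //; exact: compact_closed.
have := img_gconn ch he cnA'.
have hf : forall y, (h y).1 = f y by move=> y; rewrite fgh.
have inS : forall i, (h @` (pi @^-1` A)) (f xb, i).
  move=> i; have [w hw] := hs (f xb, i).
  exists w => //.
  have : (A `|` B) (pi w) by rewrite AB.
  case=> // Bw; exfalso; apply: (vB w Bw); by rewrite -hf hw.
apply; exists (h @` (pi @^-1` A) `&` [set x | x.2 = false]),
  (h @` (pi @^-1` A) `&` [set x | x.2 = true]); split; split.
- apply/seteqP; split => x; first by case=> -[].
  by move=> Sx; case b2: x.2; [right|left]; split.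
- by apply/seteqP; split => // x [[_ /= h1] [_ /= h2]]; move: h2; rewrite h1.
- by exists (f xb, false); split => //; exact: inS.
- by exists (f xb, true); split => //; exact: inS.
- by exists [set x | x.2 = false].
- by exists [set x | x.2 = true].
- move=> p q [[y Ay <-] p2] [_ q2]; rewrite /dbl p2 q2 /= /link.
  by move=> /andP [_ /eqP]; rewrite hf; exact: uA.
Qed.
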